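(* Let $C:=\sqrt{\frac{15+\sqrt{65}}{8}}$ and let $g:\mathbb{R}\to\mathbb{R}$ be $$g(z):=-\frac{2}{5}z^4+\frac{8}{5}Cz^3+\Big(\frac32-\frac{12}{5}C^2\Big)z^2+\Big(\frac85C^3-3C\Big)z+1 .$$ For $W=[w_1,w_2,w_3]$ with $w_1,w_2,w_3\in\mathbb{R}^3$ and $b=[b_1,b_2,b_3]\in\mathbb{R}^3$, define $f(\cdot;W):\mathbb{R}^3\to\mathbb{R}^3$ by $f(x;W):=[g(\langle w_1,x\rangle+b_1),g(\langle w_2,x\rangle+b_2),g(\langle w_3,x\rangle+b_3)]^\top$. Then there exist such $W$ and $b$ for which $f(\cdot;W)$ has two distinct fixed points $p_1,p_2\in\mathbb{R}^3$ such that for each $i\in\{1,2\}$ there exist constants $\epsilon_i>0$, $c_i>0$ and $K_i\in[0,1)$ with the following property: for every initial point $x^{(0)}\in\prod_{j=1}^3[p_{i,j}-\epsilon_i,p_{i,j}+\epsilon_i]$, the fixed-point iteration $x^{(t)}=f(x^{(t-1)};W)$ ($t\ge1$) converges to $p_i$, and for every $t\ge2$, $$\|x^{(t)}-p_i\|_\infty\le K_i^t\cdot c_i\epsilon_i .$$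
   Context: $p_{i,j}$ denotes the $j$-th coordinate of $p_i$; $\|\cdot\|_\infty$ is the $\ell_\infty$ norm. A fixed point of $F$ is a point $p$ with $F(p)=p$. *)

(* Defs.v *)
From Stdlib Require Import Reals.
Open Scope R_scope.

Record vec3 := mk3 { v1 : R ; v2 : R ; v3 : R }.

Definition inner (w x : vec3) : R := v1 w * v1 x + v2 w * v2 x + v3 w * v3 x.

Definition vsub (x y : vec3) : vec3 := mk3 (v1 x - v1 y) (v2 x - v2 y) (v3 x - v3 y).

Definition norm_inf (x : vec3) : R := Rmax (Rabs (v1 x)) (Rmax (Rabs (v2 x)) (Rabs (v3 x))).

Definition Cst : R := sqrt ((15 + sqrt 65) / 8).

Definition g (z : R) : R :=
  - (2/5) * z ^ 4 + (8/5) * Cst * z ^ 3 + (3/2 - (12/5) * Cst ^ 2) * z ^ 2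
  + ((8/5) * Cst ^ 3 - 3 * Cst) * z + 1.

Definition fW (w1 w2 w3 b : vec3) (x : vec3) : vec3 :=
  mk3 (g (inner w1 x + v1 b)) (g (inner w2 x + v2 b)) (g (inner w3 x + v3 b)).

Definition iterate (F : vec3 -> vec3) (t : nat) (x0 : vec3) : vec3 := Nat.iter t F x0.

Definition in_box (p : vec3) (eps : R) (x : vec3) : Prop :=
  p.(v1) - eps <= x.(v1) <= p.(v1) + eps /\
  p.(v2) - eps <= x.(v2) <= p.(v2) + eps /\
  p.(v3) - eps <= x.(v3) <= p.(v3) + eps.

Definition converges_to (u : nat -> vec3) (p : vec3) : Prop :=
  forall e, 0 < e -> exists N, forall t, (N <= t)%nat -> norm_inf (vsub (u t) p) < e.

Definition locally_linearly_attracting (F : vec3 -> vec3) (p : vec3) : Prop :=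
  exists eps c K, 0 < eps /\ 0 < c /\ 0 <= K < 1 /\
    forall x0, in_box p eps x0 ->
      converges_to (fun t => iterate F t x0) p /\
      forall t, (2 <= t)%nat -> norm_inf (vsub (iterate F t x0) p) <= K ^ t * c * eps.

(* Main.v *)
Require Import Defs.
From Stdlib Require Import Reals Lra Psatz.
Open Scope R_scope.
Definition q (u : R) := -(2/5)*u^4 + 3/2*u^2.
Lemma abs_btw x a : Rabs x <= a -> -a <= x <= a.
Proof. unfold Rabs; destruct Rcase_abs; lra. Qed.
Lemma mon d e : 0 <= e -> -e <= d <= e -> 0 <= d^2 <= e^2 /\ - e^3 <= d^3 <= e^3.
Proof. intros He Hd. assert (0 <= d^2) by nra. assert (d^2 <= e^2) by nra.
 split; [lra|]. split; nra. Qed.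
Lemma fac d r E : E = d * r -> -(1/2) <= r <= 1/2 -> Rabs E <= 1/2 * Rabs d.
Proof. intros -> Hr. rewrite Rabs_mult, (Rmult_comm (1/2)). apply Rmult_le_compat_l. apply Rabs_pos.
 unfold Rabs; destruct Rcase_abs; lra. Qed.
Lemma t1 x : Rabs (x - 0) <= 1/10 -> Rabs (q (135/142*x) - 0) <= 1/2 * Rabs (x - 0).
Proof. unfold q; rewrite !Rminus_0_r. intros H. apply abs_btw in H.
 destruct (mon x (1/10)) as [[A B] [C D]]; try lra.
 eapply fac with (r := -(2/5)*(135/142)^4*x^3 + 3/2*(135/142)^2*x). - field. - split; lra. Qed.
Lemma t2 x : Rabs (x - 568/405) <= 1/100 -> Rabs (q (135/142*x) - 568/405) <= 1/2 * Rabs (x - 568/405).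
Proof. unfold q; intros H. set (d := x - 568/405) in *.
 replace x with (568/405 + d) by (unfold d; ring). clearbody d.
 apply abs_btw in H.
 destruct (mon d (1/100)) as [[A B] [C D]]; try lra.
 eapply fac with (r := 14/71 - 100845/40328*d - 656100/357911*d^2 - 66430125/203293448*d^3). - field. - split; lra. Qed.

Lemma g_q z : g z = q (z - Cst).
Proof.
  assert (Hs : sqrt 65 * sqrt 65 = 65) by (apply sqrt_sqrt; lra).
  assert (Hs0 : 0 <= sqrt 65) by apply sqrt_pos.
  assert (HC : Cst * Cst = (15 + sqrt 65) / 8) by (unfold Cst; apply sqrt_sqrt; lra).
  assert (E : 4*Cst^4 - 15*Cst^2 + 10 = 0).
  { replace (Cst^4) with ((Cst*Cst)*(Cst*Cst)) by ring.
    replace (Cst^2) with (Cst*Cst) by ring. rewrite HC. nra. }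
  assert (D : g z - q (z - Cst) = (10 - 15*Cst^2 + 4*Cst^4)/10)
    by (unfold g, q; field).
  lra.
Qed.

Lemma half_pow t : 0 <= (1/2)^t <= 1.
Proof. induction t; simpl; lra. Qed.

Lemma scal (h : R -> R) xs eps :
  (forall x, Rabs (x - xs) <= eps -> Rabs (h x - xs) <= 1/2 * Rabs (x - xs)) ->
  forall y, Rabs (y - xs) <= eps -> forall t, Rabs (Nat.iter t h y - xs) <= (1/2)^t * eps.
Proof.
  intros Hh y Hy t. assert (0 <= eps) by (pose proof (Rabs_pos (y - xs)); lra). induction t.
  - simpl. lra.
  - simpl Nat.iter. destruct (half_pow t).
    assert (Rabs (Nat.iter t h y - xs) <= eps) by nra.
    specialize (Hh _ H2). simpl. lra.
Qed.

Lemma attr (F : vec3 -> vec3) (h : R -> R) xs eps : 0 < eps ->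
  (forall x, F x = mk3 (h (v1 x)) (h (v2 x)) (h (v3 x))) ->
  (forall x, Rabs (x - xs) <= eps -> Rabs (h x - xs) <= 1/2 * Rabs (x - xs)) ->
  locally_linearly_attracting F (mk3 xs xs xs).
Proof.
  intros Heps HF Hh. exists eps, 1, (1/2).
  split; [lra|]. split; [lra|]. split; [lra|].
  intros x0 Hb.
  assert (It : forall t, iterate F t x0 = mk3 (Nat.iter t h (v1 x0)) (Nat.iter t h (v2 x0)) (Nat.iter t h (v3 x0))).
  { induction t. - destruct x0; reflexivity. - unfold iterate in *. simpl. rewrite IHt, HF. reflexivity. }
  destruct Hb as [B1 [B2 B3]]; simpl in B1, B2, B3.
  assert (Bd : forall t, norm_inf (vsub (iterate F t x0) (mk3 xs xs xs)) <= (1/2)^t * eps).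
  { intro t. rewrite It. unfold norm_inf, vsub; simpl.
    repeat apply Rmax_lub; apply (scal h xs eps Hh); apply Rabs_le; lra. }
  split.
  - intros e He. destruct (pow_lt_1_zero (1/2)) with (y := e/eps) as [N HN].
    + rewrite Rabs_right; lra.
    + apply Rdiv_lt_0_compat; lra.
    + exists N. intros t Ht. specialize (HN t Ht). specialize (Bd t).
      destruct (half_pow t). rewrite Rabs_right in HN by lra.
      apply Rmult_lt_compat_r with (r := eps) in HN; [|lra].
      replace (e / eps * eps) with e in HN by (field; lra). lra.
  - intros t _. specialize (Bd t). lra.
Qed.

Theorem lemmaB5 :
  exists (w1 w2 w3 b p1 p2 : vec3),
    fW w1 w2 w3 b p1 = p1 /\ fW w1 w2 w3 b p2 = p2 /\ p1 <> p2 /\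
    locally_linearly_attracting (fW w1 w2 w3 b) p1 /\
    locally_linearly_attracting (fW w1 w2 w3 b) p2.
Proof.
  set (a := 135/142).
  assert (HF : forall x, fW (mk3 a 0 0) (mk3 0 a 0) (mk3 0 0 a) (mk3 Cst Cst Cst) x
     = mk3 (q (a * v1 x)) (q (a * v2 x)) (q (a * v3 x))).
  { intro x. unfold fW, inner; simpl. rewrite !g_q. f_equal; f_equal; ring. }
  exists (mk3 a 0 0), (mk3 0 a 0), (mk3 0 0 a), (mk3 Cst Cst Cst),
    (mk3 0 0 0), (mk3 (568/405) (568/405) (568/405)).
  split; [rewrite HF; simpl; unfold q, a; f_equal; field|].
  split; [rewrite HF; simpl; unfold q, a; f_equal; field|].
  split; [intro H; injection H; lra|].
  split.
  - apply (attr _ (fun x => q (a * x)) 0 (1/10)); [lra|exact HF|exact t1].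
  - apply (attr _ (fun x => q (a * x)) (568/405) (1/100)); [lra|exact HF|exact t2].
Qed.
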